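(* Let $\mathfrak g$ be a 4-dimensional real almost abelian Lie algebra admitting an LCS structure. Then $\mathfrak g$ is isomorphic to one of the following Lie algebras (basis $\{e_1,e_2,e_3,e_4\}$, only nonzero brackets listed): $\mathfrak h_3\times\mathbb R$: $[e_1,e_2]=e_3$; $\mathfrak n_4$: $[e_1,e_2]=e_3$, $[e_1,e_3]=e_4$; $\mathfrak r_{3,\lambda}\times\mathbb R$ ($\lambda\in\mathbb R$): $[e_1,e_2]=e_2$, $[e_1,e_3]=\lambda e_3$; $\mathfrak r_{4,\mu,\lambda}$ ($\mu\lambda\neq0$): $[e_1,e_2]=e_2$, $[e_1,e_3]=\mu e_3$, $[e_1,e_4]=\lambda e_4$; $\mathfrak r_3\times\mathbb R$: $[e_1,e_2]=e_2$, $[e_1,e_3]=e_2+e_3$; $\mathfrak r_{4,\lambda}$ ($\lambda\in\mathbb R$): $[e_1,e_2]=e_2$, $[e_1,e_3]=\lambda e_3$, $[e_1,e_4]=e_3+\lambda e_4$; $\mathfrak r_4$: $[e_1,e_2]=e_2$, $[e_1,e_3]=e_2+e_3$, $[e_1,e_4]=e_3+e_4$; $\mathfrak r'_{3,\lambda}\times\mathbb R$ ($\lambda\in\mathbb R$): $[e_1,e_2]=\lambda e_2-e_3$, $[e_1,e_3]=e_2+\lambda e_3$; $\mathfrak r'_{4,\mu,\lambda}$ ($\mu\neq0$, $\lambda\neq0$): $[e_1,e_2]=\mu e_2$, $[e_1,e_3]=\lambda e_3-e_4$, $[e_1,e_4]=e_3+\lambda e_4$.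
   Context: An almost abelian Lie algebra is a real Lie algebra with an abelian ideal of codimension one. An LCS structure on $\mathfrak g$ is a pair $(\omega,\theta)$ with $\omega\in\Lambda^2\mathfrak g^*$ non-degenerate and $\theta\in\mathfrak g^*$ closed and nonzero, such that $d\omega=\theta\wedge\omega$ ($d$ the Chevalley–Eilenberg differential). *)

(* Defs.v *)
From HB Require Import structures.
From mathcomp Require Import all_boot all_order all_algebra.
From mathcomp Require Import reals.
Set Implicit Arguments. Unset Strict Implicit. Unset Printing Implicit Defensive.
Import Order.TTheory GRing.Theory Num.Theory.
Local Open Scope ring_scope.

(* A 4-dimensional real Lie algebra is modelled (up to isomorphism) on R^4 = 'rV[R]_4
   with a bracket br; basis vectors e_1..e_4 are the rows of the identity (indices 0..3). *)
Section Defs.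
Variable R : realType.
Notation V := 'rV[R]_4.

Definition is_lie_bracket (br : V -> V -> V) : Prop :=
  [/\ (forall (a : R) x y z, br (a *: x + y) z = a *: br x z + br y z),
      (forall (a : R) x y z, br x (a *: y + z) = a *: br x y + br x z),
      (forall x, br x x = 0)
    & (forall x y z, br x (br y z) + br y (br z x) + br z (br x y) = 0)].

Definition almost_abelian (br : V -> V -> V) : Prop :=
  exists U : 'M[R]_4,
    [/\ \rank U = 3%N,
        (forall x y, (x <= U)%MS -> (br x y <= U)%MS)
      & (forall x y, (x <= U)%MS -> (y <= U)%MS -> br x y = 0)].

(* 1-forms theta in g^* are column vectors T: theta(x) = (x *m T) 0 0;
   2-forms omega in Lambda^2 g^* are skew matrices W: omega(x,y) = (x *m W *m y^T) 0 0. *)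
Definition form1 (T : 'cV[R]_4) (x : V) : R := (x *m T) 0 0.
Definition form2 (W : 'M[R]_4) (x y : V) : R := (x *m W *m y^T) 0 0.

(* Chevalley-Eilenberg differentials (trivial coefficients):
   d theta (x,y) = - theta([x,y]);
   d omega (x,y,z) = - omega([x,y],z) + omega([x,z],y) - omega([y,z],x). *)
Definition d1 (br : V -> V -> V) (T : 'cV[R]_4) (x y : V) : R :=
  - form1 T (br x y).
Definition d2 (br : V -> V -> V) (W : 'M[R]_4) (x y z : V) : R :=
  - form2 W (br x y) z + form2 W (br x z) y - form2 W (br y z) x.
Definition wedge12 (T : 'cV[R]_4) (W : 'M[R]_4) (x y z : V) : R :=
  form1 T x * form2 W y z - form1 T y * form2 W x z + form1 T z * form2 W x y.

Definition is_LCS (br : V -> V -> V) (W : 'M[R]_4) (T : 'cV[R]_4) : Prop :=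
  [/\ W^T = - W,
      W \in unitmx,
      T != 0,
      (forall x y, d1 br T x y = 0)
    & (forall x y z, d2 br W x y z = wedge12 T W x y z)].

Definition has_LCS (br : V -> V -> V) : Prop := exists W T, is_LCS br W T.

Definition lie_isomorphic (br1 br2 : V -> V -> V) : Prop :=
  exists A : 'M[R]_4, A \in unitmx /\
    forall x y, br1 x y *m A = br2 (x *m A) (y *m A).

(* Model algebras: only brackets [e1, e_j] (j = 2,3,4) are nonzero;
   f j k = coefficient of e_{k+1} in [e1, e_{j+1}] (j,k in 1..3, 0-based). *)
Definition mkad (f : nat -> nat -> R) : 'M[R]_4 :=
  \matrix_(i < 4, j < 4) if ((i == 0%N :> nat) || (j == 0%N :> nat)) then 0 else f i j.

(* [x,y] = x_1 ad(y) - y_1 ad(x), where the row i of M is [e1, e_{i+1}] *)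
Definition model_br (M : 'M[R]_4) (x y : V) : V :=
  x 0 0 *: (y *m M) - y 0 0 *: (x *m M).

Definition h3R : 'M[R]_4 := mkad (fun i j => match i, j with 1%N, 2%N => 1 | _, _ => 0 end).
Definition n4 : 'M[R]_4 :=
  mkad (fun i j => match i, j with 1%N, 2%N => 1 | 2%N, 3%N => 1 | _, _ => 0 end).
Definition r3R (l : R) : 'M[R]_4 :=
  mkad (fun i j => match i, j with 1%N, 1%N => 1 | 2%N, 2%N => l | _, _ => 0 end).
Definition r4ml (m l : R) : 'M[R]_4 :=
  mkad (fun i j => match i, j with 1%N, 1%N => 1 | 2%N, 2%N => m | 3%N, 3%N => l | _, _ => 0 end).
Definition r3R0 : 'M[R]_4 :=
  mkad (fun i j => match i, j with 1%N, 1%N => 1 | 2%N, 1%N => 1 | 2%N, 2%N => 1 | _, _ => 0 end).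
Definition r4l (l : R) : 'M[R]_4 :=
  mkad (fun i j => match i, j with
                   1%N, 1%N => 1 | 2%N, 2%N => l | 3%N, 2%N => 1 | 3%N, 3%N => l | _, _ => 0 end).
Definition r4 : 'M[R]_4 :=
  mkad (fun i j => match i, j with
                   1%N, 1%N => 1 | 2%N, 1%N => 1 | 2%N, 2%N => 1 | 3%N, 2%N => 1 | 3%N, 3%N => 1
                 | _, _ => 0 end).
Definition r3pR (l : R) : 'M[R]_4 :=
  mkad (fun i j => match i, j with
                   1%N, 1%N => l | 1%N, 2%N => -1 | 2%N, 1%N => 1 | 2%N, 2%N => l | _, _ => 0 end).
Definition r4pml (m l : R) : 'M[R]_4 :=
  mkad (fun i j => match i, j with
                   1%N, 1%N => m | 2%N, 2%N => l | 2%N, 3%N => -1 | 3%N, 2%N => 1 | 3%N, 3%N => l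
                 | _, _ => 0 end).

Definition in_list (br : V -> V -> V) : Prop :=
     lie_isomorphic br (model_br h3R)
  \/ lie_isomorphic br (model_br n4)
  \/ (exists l, lie_isomorphic br (model_br (r3R l)))
  \/ (exists m l, m * l != 0 /\ lie_isomorphic br (model_br (r4ml m l)))
  \/ lie_isomorphic br (model_br r3R0)
  \/ (exists l, lie_isomorphic br (model_br (r4l l)))
  \/ lie_isomorphic br (model_br r4)
  \/ (exists l, lie_isomorphic br (model_br (r3pR l)))
  \/ (exists m l, [/\ m != 0, l != 0 & lie_isomorphic br (model_br (r4pml m l))]).
End Defs.

(* Main.v *)
Require Import Defs.
From HB Require Import structures.
From mathcomp Require Import all_boot all_order all_algebra.
From mathcomp Require Import reals.
Import Order.TTheory GRing.Theory Num.Theory.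
Local Open Scope ring_scope.

From mathcomp Require Import fingroup perm.
From mathcomp.real_closed Require polyrcf.
From mathcomp.algebra_tactics Require Import ring lra.
Set Implicit Arguments. Unset Strict Implicit. Unset Printing Implicit Defensive.
Import Order.TTheory GRing.Theory Num.Theory.

Section M3.
Variable R : realType.

Definition m3 (a b c d e f g h i : R) : 'M[R]_3 :=
  \matrix_(x < 3, y < 3) nth 0 (nth [::] [:: [:: a; b; c]; [:: d; e; f]; [:: g; h; i]] x) y.

Definition i0 : 'I_3 := ord0.
Definition i1 : 'I_3 := Ordinal (isT : 1 < 3)%N.
Definition i2 : 'I_3 := Ordinal (isT : 2 < 3)%N.

Lemma m3E (A : 'M[R]_3) : A = m3 (A i0 i0) (A i0 i1) (A i0 i2) (A i1 i0) (A i1 i1) (A i1 i2)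
   (A i2 i0) (A i2 i1) (A i2 i2).
Proof.
apply/matrixP => i j; rewrite mxE.
case: i => [[|[|[|//]]] Hi]; case: j => [[|[|[|//]]] Hj] /=;
 by congr (A _ _); apply/val_inj.
Qed.

Lemma mul_m3 a b c d e f g h i a' b' c' d' e' f' g' h' i' :
  m3 a b c d e f g h i *m m3 a' b' c' d' e' f' g' h' i' =
  m3 (a*a' + b*d' + c*g') (a*b' + b*e' + c*h') (a*c' + b*f' + c*i')
     (d*a' + e*d' + f*g') (d*b' + e*e' + f*h') (d*c' + e*f' + f*i')
     (g*a' + h*d' + i*g') (g*b' + h*e' + i*h') (g*c' + h*f' + i*i').
Proof.
apply/matrixP => x y; rewrite !mxE !big_ord_recr big_ord0 /= !mxE /=.
case: x => [[|[|[|//]]] Hx]; case: y => [[|[|[|//]]] Hy] /=; ring.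
Qed.

Lemma scale_m3 k a b c d e f g h i :
  k *: m3 a b c d e f g h i = m3 (k*a) (k*b) (k*c) (k*d) (k*e) (k*f) (k*g) (k*h) (k*i).
Proof.
apply/matrixP => x y; rewrite !mxE.
case: x => [[|[|[|//]]] Hx]; case: y => [[|[|[|//]]] Hy] //=.
Qed.

Lemma m3_congr a b c d e f g h i a' b' c' d' e' f' g' h' i' :
  a = a' -> b = b' -> c = c' -> d = d' -> e = e' -> f = f' -> g = g' -> h = h' -> i = i' ->
  m3 a b c d e f g h i = m3 a' b' c' d' e' f' g' h' i'.
Proof. by move=> -> -> -> -> -> -> -> -> ->. Qed.

Lemma m3_1 : (1%:M : 'M[R]_3) = m3 1 0 0 0 1 0 0 0 1.
Proof.
apply/matrixP => x y; rewrite !mxE.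
case: x => [[|[|[|//]]] Hx]; case: y => [[|[|[|//]]] Hy] //=.
Qed.

Definition det3 a b c d e f g h i : R :=
  a * (e * i - f * h) - b * (d * i - f * g) + c * (d * h - e * g).

Lemma unit_m3 a b c d e f g h i : det3 a b c d e f g h i != 0 ->
  m3 a b c d e f g h i \in unitmx.
Proof.
move=> H; set D := det3 a b c d e f g h i.
have: m3 a b c d e f g h i *m
  m3 ((e*i - f*h)/D) (-(b*i - c*h)/D) ((b*f - c*e)/D)
     (-(d*i - f*g)/D) ((a*i - c*g)/D) (-(a*f - c*d)/D)
     ((d*h - e*g)/D) (-(a*h - b*g)/D) ((a*e - b*d)/D) = 1%:M.
  rewrite mul_m3 m3_1; apply: m3_congr; rewrite /D /det3 in H *; field; exact: H.
by case/mulmx1_unit.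
Qed.
End M3.

Section Model.
Variable R : realType.
Implicit Types (M : 'M[R]_4) (B : 'M[R]_3).

Definition sim B B' := exists P c, [/\ P \in unitmx, c != 0 & P *m B = c *: (B' *m P)].

Definition blk M : 'M[R]_3 := \matrix_(i, j) M (lift ord0 i) (lift ord0 j).
Definition is_model M := (forall j, M ord0 j = 0) /\ (forall i, M i ord0 = 0).
Definition lft (a : R) B : 'M[R]_4 := \matrix_(i, j)
  match unlift ord0 i, unlift ord0 j with Some i', Some j' => B i' j'
  | None, None => a | _, _ => 0 end.
Definition emb B : 'M[R]_4 := lft 0 B.

Lemma blk_lft a B : blk (lft a B) = B.
Proof. by apply/matrixP => i j; rewrite !mxE !liftK. Qed.

Lemma emb_model B : is_model (emb B).
Proof. by split => k; rewrite mxE unlift_none // ; case: unlift. Qed.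

Lemma model_emb M : is_model M -> M = emb (blk M).
Proof.
move=> [H1 H2]; apply/matrixP => i j; rewrite !mxE.
case: (unliftP ord0 i) => [i'|] ->; case: (unliftP ord0 j) => [j'|] ->;
  by rewrite ?liftK ?unlift_none ?H1 ?H2 ?mxE.
Qed.

Lemma mul4E m n (A : 'M[R]_(m, 4)) (C : 'M[R]_(4, n)) i j :
  (A *m C) i j = A i ord0 * C ord0 j + \sum_k A i (lift ord0 k) * C (lift ord0 k) j.
Proof. by rewrite mxE big_ord_recl. Qed.

Lemma lft_ll a A i j : lft a A (lift ord0 i) (lift ord0 j) = A i j.
Proof. by rewrite mxE !liftK. Qed.
Lemma lft_l0 a A i : lft a A (lift ord0 i) ord0 = 0.
Proof. by rewrite mxE liftK unlift_none. Qed.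
Lemma lft_0l a A j : lft a A ord0 (lift ord0 j) = 0.
Proof. by rewrite mxE liftK unlift_none. Qed.
Lemma lft_00 a A : lft a A ord0 ord0 = a.
Proof. by rewrite mxE unlift_none. Qed.

Lemma lft_mul a b A C : lft a A *m lft b C = lft (a * b) (A *m C).
Proof.
apply/matrixP => i j; rewrite mul4E.
case: (unliftP ord0 i) => [i'|] ->; case: (unliftP ord0 j) => [j'|] ->;
  rewrite ?lft_ll ?lft_l0 ?lft_0l ?lft_00 ?mul0r ?mulr0 ?add0r.
- by rewrite mxE; apply: eq_bigr => k _; rewrite !lft_ll.
- by rewrite big1 // => k _; rewrite lft_l0 mulr0.
- by rewrite big1 // => k _; rewrite lft_0l mul0r.
- by rewrite big1 ?addr0 // => k _; rewrite lft_0l mul0r.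
Qed.

Lemma lft1 : lft 1 1%:M = 1%:M.
Proof.
apply/matrixP => i j; rewrite [RHS]mxE.
case: (unliftP ord0 i) => [i'|] ->; case: (unliftP ord0 j) => [j'|] ->;
  rewrite ?lft_ll ?lft_l0 ?lft_0l ?lft_00 //.
by rewrite mxE (inj_eq lift_inj).
Qed.

Lemma scale_lft k a A : k *: lft a A = lft (k * a) (k *: A).
Proof.
apply/matrixP => i j; rewrite [LHS]mxE.
case: (unliftP ord0 i) => [i'|] ->; case: (unliftP ord0 j) => [j'|] ->;
  by rewrite ?lft_ll ?lft_l0 ?lft_0l ?lft_00 ?mxE ?mulr0.
Qed.

Lemma lft_x00 (x : 'rV[R]_4) a A : (x *m lft a A) 0 0 = x 0 0 * a.
Proof.
rewrite mul4E [lft _ _ _ _]mxE unlift_none big1 ?addr0 // => k _.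
by rewrite [lft _ _ _ _]mxE liftK unlift_none mulr0.
Qed.

Lemma iso_sim M M' : is_model M -> is_model M' -> sim (blk M) (blk M') ->
  lie_isomorphic (model_br M) (model_br M').
Proof.
move=> /model_emb EM /model_emb EM' [P [c [Pu c0 PB]]].
set Q := invmx P.
have BQ : blk M *m Q = c *: (Q *m blk M').
  transitivity (Q *m (P *m blk M) *m Q); first by rewrite mulKmx.
  by rewrite PB -scalemxAr -scalemxAl -!mulmxA mulmxV // mulmx1.
exists (lft c Q); split.
  have /mulmx1_unit [] // : lft c Q *m lft c^-1 P = 1%:M.
  by rewrite lft_mul mulfV // mulVmx // lft1.
have MK : M *m lft c Q = c *: (lft c Q *m M').
  by rewrite EM EM' /emb !lft_mul scale_lft BQ mul0r mulr0 mulr0.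
move=> x y; rewrite /model_br mulmxBl -!scalemxAl -!mulmxA MK.
rewrite !lft_x00 -!scalemxAr !scalerA !mulmxA; congr (_ *: _ - _ *: _); ring.
Qed.

End Model.

Section Transfer.
Variable R : realType.
Notation V := 'rV[R]_4.
Implicit Types (br : V -> V -> V) (B : 'M[R]_3).

Lemma iso_trans br1 br2 br3 : lie_isomorphic br1 br2 -> lie_isomorphic br2 br3 ->
  lie_isomorphic br1 br3.
Proof.
move=> [A [Au HA]] [C [Cu HC]]; exists (A *m C); split; first by rewrite unitmx_mul Au.
by move=> x y; rewrite mulmxA HA HC !mulmxA.
Qed.

Lemma in_list_iso br1 br2 : lie_isomorphic br1 br2 -> in_list br2 -> in_list br1.
Proof.
move=> I12; have T := iso_trans I12.
case=> [H|[H|[[l H]|[[m [l [? H]]]|[H|[[l H]|[H|[[l H]|[m [l [? ? H]]]]]]]]]]].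
- by left; apply: T.
- by right; left; apply: T.
- by right; right; left; exists l; apply: T.
- by right; right; right; left; exists m, l; split=> //; apply: T.
- by do 4 right; left; apply: T.
- by do 5 right; left; exists l; apply: T.
- by do 6 right; left; apply: T.
- by do 7 right; left; exists l; apply: T.
- by do 8 right; exists m, l; split=> //; apply: T.
Qed.

Lemma LCS_iso br1 br2 : lie_isomorphic br1 br2 -> has_LCS br1 -> has_LCS br2.
Proof.
move=> [A [Au HA]] [W [T [WT Wu T0 d1T d2W]]].
set Ai := invmx A.
have AAi : A *m Ai = 1%:M by rewrite mulmxV.
have f1 : forall u, form1 (Ai *m T) (u *m A) = form1 T u.
  by move=> u; rewrite /form1 mulmxA -(mulmxA u) AAi mulmx1.
have f2 : forall u v, form2 (Ai *m W *m Ai^T) (u *m A) (v *m A) = form2 W u v.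
  move=> u v; rewrite /form2 trmx_mul !mulmxA -(mulmxA u A Ai) AAi mulmx1.
  by rewrite -(mulmxA _ Ai^T A^T) -trmx_mul AAi trmx1 mulmx1.
have xE : forall x : V, x = (x *m Ai) *m A by move=> x; rewrite /Ai mulmxKV.
exists (Ai *m W *m Ai^T), (Ai *m T); split.
- by rewrite !trmx_mul trmxK WT mulNmx mulmxN mulmxA.
- by rewrite !unitmx_mul unitmx_tr !unitmx_inv Au Wu.
- apply: contra T0 => /eqP H; apply/eqP.
  by rewrite -[T]mul1mx -AAi -mulmxA H mulmx0.
- move=> x y; rewrite (xE x) (xE y) /d1 -HA f1; exact: d1T.
- move=> x y z; rewrite (xE x) (xE y) (xE z) /d2 /wedge12 -!HA !f1 !f2; exact: d2W.
Qed.

Definition Good B := has_LCS (model_br (emb B)) -> in_list (model_br (emb B)).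

Lemma Good_sim B B' : sim B B' -> Good B' -> Good B.
Proof.
move=> S G L.
have I : lie_isomorphic (model_br (emb B)) (model_br (emb B')).
  by apply: iso_sim; rewrite ?blk_lft //; apply: emb_model.
exact: in_list_iso I (G (LCS_iso I L)).
Qed.

Lemma sim_refl B : sim B B.
Proof. by exists 1%:M, 1; rewrite unitmx1 oner_eq0 mul1mx mulmx1 scale1r. Qed.

Lemma sim_trans B1 B2 B3 : sim B1 B2 -> sim B2 B3 -> sim B1 B3.
Proof.
move=> [P [c [Pu c0 H]]] [P' [c' [Pu' c0' H']]].
exists (P' *m P), (c * c'); split; first by rewrite unitmx_mul Pu Pu'.
  by rewrite mulf_neq0.
by rewrite -mulmxA H -scalemxAr mulmxA H' -scalemxAl -mulmxA scalerA mulrC.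
Qed.

End Transfer.

Section Reduce.
Variable R : realType.
Notation V := 'rV[R]_4.
Implicit Types (br : V -> V -> V) (B : 'M[R]_3).

Definition bil (f : V -> V -> V) :=
  (forall (a : R) x y z, f (a *: x + y) z = a *: f x z + f y z) /\
  (forall (a : R) x y z, f x (a *: y + z) = a *: f x y + f x z).

Lemma bil_sum1 f : bil f -> forall (a : 'I_4 -> R) (v : 'I_4 -> V) z,
  f (\sum_i a i *: v i) z = \sum_i a i *: f (v i) z.
Proof.
move=> [L1 L2] a v z.
have f0 : f 0 z = 0.
  have := L1 1 0 0 z; rewrite !scale1r addr0.
  by move/(congr1 (fun w => w - f 0 z)); rewrite subrr addrK.
apply: (big_rec2 (fun s t => f s z = t)) => // i s t _ <-; exact: L1.
Qed.

Lemma bil_sum2 f : bil f -> forall (a : 'I_4 -> R) (v : 'I_4 -> V) z,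
  f z (\sum_i a i *: v i) = \sum_i a i *: f z (v i).
Proof.
move=> [L1 L2] a v z.
have f0 : f z 0 = 0.
  have := L2 1 z 0 0; rewrite !scale1r addr0.
  by move/(congr1 (fun w => w - f z 0)); rewrite subrr addrK.
apply: (big_rec2 (fun s t => f z s = t)) => // i s t _ <-; exact: L2.
Qed.

Definition e (i : 'I_4) : V := delta_mx 0 i.

Lemma bil_ext f g : bil f -> bil g -> (forall i j, f (e i) (e j) = g (e i) (e j)) ->
  forall x y, f x y = g x y.
Proof.
move=> bf bg H x y.
rewrite (row_sum_delta x) (row_sum_delta y) !bil_sum1 //; apply: eq_bigr => i _.
by rewrite !bil_sum2 //; congr (_ *: _); apply: eq_bigr => j _; rewrite H.
Qed.

Lemma bil_model M : bil (model_br M).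
Proof.
split=> a x y z; rewrite /model_br.
- rewrite mulmxDl -scalemxAl; apply/rowP => k; rewrite !mxE; ring.
- rewrite mulmxDl -scalemxAl; apply/rowP => k; rewrite !mxE; ring.
Qed.


Lemma reduce br : is_lie_bracket br -> almost_abelian br ->
  exists M, is_model M /\ lie_isomorphic br (model_br M).
Proof.
move=> [L1 L2 Lxx _] [U [rU Uid Uab]].
have brD1 x y z : br (x + y) z = br x z + br y z by have := L1 1 x y z; rewrite !scale1r.
have brD2 x y z : br z (x + y) = br z x + br z y by have := L2 1 z x y; rewrite !scale1r.
have anti x y : br y x = - br x y.
  move: (Lxx (x + y)) => /eqP.
  by rewrite brD1 !brD2 !Lxx add0r addr0 addrC addr_eq0 => /eqP.
pose E := row_ebase U; pose C := col_ebase U.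
pose s := (tperm ord0 ord_max : 'S_4).
pose Q := row_perm s E.
have Qu : Q \in unitmx by rewrite /Q row_permE unitmx_mul unitmx_perm row_ebase_unit.
have hE : C *m pid_mx 3 *m E = U by have := mulmx_ebase U; rewrite rU.
have rowE3 (k : 'I_4) : (k < 3)%N -> (row k E <= U)%MS.
  move=> Hk.
  have -> : row k E = row k (invmx C *m U).
    rewrite -hE -!mulmxA mulKmx ?col_ebase_unit // row_mul [LHS]rowE; congr (_ *m _).
    apply/rowP => j; rewrite !mxE Hk andbT.
    by case: k Hk => [[|[|[|//]]] ?] _; case: j => [[|[|[|[|//]]]] ?].
  exact: submx_trans (row_sub _ _) (submxMl _ _).
have rowQ (k : 'I_3) : (row (lift ord0 k) Q <= U)%MS.
  have -> : row (lift ord0 k) Q = row (s (lift ord0 k)) E.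
    by apply/rowP => j; rewrite !mxE.
  apply: rowE3; rewrite /s.
  case: tpermP => [/eqP|//|].
    by rewrite eq_sym (negbTE (neq_lift _ _)).
  move=> _; case: k => [[|[|[|//]]] ?] //= H.
  by exfalso; apply: H; apply: val_inj.
have coord u : (u <= U)%MS -> (u *m invmx Q) 0 0 = 0.
  move/submxP=> [w ->]; rewrite -hE.
  have -> : E = perm_mx s^-1 *m Q.
    by rewrite /Q row_permE mulmxA -perm_mxM mulVg perm_mx1 mul1mx.
  rewrite !mulmxA mulmxK // -col_permE mxE.
  have -> : s 0 = ord_max by rewrite /s -[0]/(ord0 : 'I_4) tpermL.
  rewrite mxE big1 // => k _; rewrite [pid_mx _ _ _]mxE.
  by case: k => [[|[|[|[|//]]]] ?] /=; rewrite ?mulr0.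
pose br' x y := br (x *m Q) (y *m Q) *m invmx Q.
have isoQ : lie_isomorphic br br'.
  exists (invmx Q); split; first by rewrite unitmx_inv.
  by move=> x y; rewrite /br' !mulmxKV.
pose Bm : 'M[R]_3 := \matrix_(j, k) (br' (e ord0) (e (lift ord0 j))) 0 (lift ord0 k).
exists (emb Bm); split; first exact: emb_model.
apply: (iso_trans isoQ); exists 1%:M; split; first exact: unitmx1.
move=> x y; rewrite !mulmx1; apply: bil_ext x y; last first.
- have eQ i : e i *m Q = row i Q by rewrite rowE.
  have e00 (k : 'I_3) : e (lift ord0 k) 0 0 = 0.
    by rewrite mxE (negbTE (neq_lift _ _)) andbF.
  have e0 : e ord0 0 0 = 1 by rewrite mxE.
  have K0 (j : 'I_3) : br' (e ord0) (e (lift ord0 j)) = model_br (emb Bm) (e ord0) (e (lift ord0 j)).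
    rewrite /model_br e00 e0 scale0r subr0 scale1r /e -rowE.
    apply/rowP => k; rewrite [in RHS]mxE /emb.
    case: (unliftP ord0 k) => [k'|] ->.
      by rewrite lft_ll [Bm _ _]mxE.
    rewrite lft_l0 /br' -/(e _) !eQ coord //.
    rewrite anti; apply/submxP.
    have /submxP [D ->] := Uid _ (row ord0 Q) (rowQ j).
    by exists (- D); rewrite mulNmx.
  move=> i j.
  case: (unliftP ord0 i) => [i'|] ->; case: (unliftP ord0 j) => [j'|] ->.
  + rewrite /br' !eQ Uab ?rowQ // mul0mx /model_br !e00 !scale0r subrr //.
  + rewrite /br' anti mulNmx -/(br' _ _) K0 /model_br !e00 e0 !scale0r scale1r.
    by rewrite subr0 sub0r.
  + exact: K0.
  + by rewrite /br' Lxx mul0mx /model_br subrr.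
- exact: bil_model.
- split=> a x y z; rewrite /br' mulmxDl -scalemxAl.
  + by rewrite L1 mulmxDl -scalemxAl.
  + by rewrite L2 mulmxDl -scalemxAl.
Qed.

End Reduce.

Section Refute.
Variable R : realType.
Notation V := 'rV[R]_4.
Local Notation e := (@e R).

Definition m4 (l : seq (seq R)) : 'M[R]_4 := \matrix_(i, j) nth 0 (nth [::] l i) j.
Definition o0 : 'I_4 := ord0.
Definition o1 : 'I_4 := Ordinal (isT : 1 < 4)%N.
Definition o2 : 'I_4 := Ordinal (isT : 2 < 4)%N.
Definition o3 : 'I_4 := Ordinal (isT : 3 < 4)%N.

Lemma mx4E m n (A : 'M[R]_(m, 4)) (B : 'M[R]_(4, n)) i j :
  (A *m B) i j = A i o0 * B o0 j + A i o1 * B o1 j + A i o2 * B o2 j + A i o3 * B o3 j.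
Proof.
rewrite mxE !big_ord_recr big_ord0 /= add0r.
by congr (_ + _ + _ + _); congr (A i _ * B _ j); apply: val_inj.
Qed.

Lemma skew4E (W : 'M[R]_4) : W^T = - W -> W = m4
  [:: [:: 0; W o0 o1; W o0 o2; W o0 o3];
      [:: - W o0 o1; 0; W o1 o2; W o1 o3];
      [:: - W o0 o2; - W o1 o2; 0; W o2 o3];
      [:: - W o0 o3; - W o1 o3; - W o2 o3; 0]].
Proof.
move=> H.
have sk i j : W j i = - W i j by have := congr1 (fun X : 'M[R]_4 => X i j) H; rewrite !mxE.
have sk0 i : W i i = 0.
  by have := sk i i; move/eqP; rewrite -subr_eq0 opprK -mulr2n mulrn_eq0 /= => /eqP.
apply/matrixP => i j; rewrite mxE.
case: i => [[|[|[|[|//]]]] Hi]; case: j => [[|[|[|[|//]]]] Hj] /=;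
  first [ (have -> : Ordinal Hj = Ordinal Hi by apply: val_inj); exact: sk0
        | (congr (W _ _); apply: val_inj; done)
        | (rewrite -sk; congr (W _ _); apply: val_inj; done) ].
Qed.


Definition Pf (W : 'M[R]_4) :=
  W o0 o1 * W o2 o3 - W o0 o2 * W o1 o3 + W o0 o3 * W o1 o2.

Lemma Pf_neq0 (W : 'M[R]_4) : W^T = - W -> W \in unitmx -> Pf W != 0.
Proof.
move=> /skew4E WE Wu; apply/negP => /eqP P0.
move: Wu P0; rewrite /Pf WE !mxE /=.
set a := W o0 o1; set b := W o0 o2; set c := W o0 o3.
set d := W o1 o2; set f := W o1 o3; set g := W o2 o3 => Wu P0.
pose D := m4 [:: [:: 0; g; -f; d]; [:: -g; 0; c; -b]; [:: f; -c; 0; a]; [:: -d; b; -a; 0]].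
set Wm := m4 _ in Wu.
have WD : Wm *m D = 0.
  apply/matrixP => i j; rewrite mx4E !mxE.
  by case: i => [[|[|[|[|//]]]] Hi]; case: j => [[|[|[|[|//]]]] Hj] /=; lra.
have D0 : D = 0 by rewrite -[D](mulKmx Wu) WD mulmx0.
have Dg : g = 0 by have := congr1 (fun X : 'M[R]_4 => X o0 o1) D0; rewrite !mxE.
have Df : f = 0 by have := congr1 (fun X : 'M[R]_4 => X o2 o0) D0; rewrite !mxE.
have Dd : d = 0 by have := congr1 (fun X : 'M[R]_4 => X o0 o3) D0; rewrite !mxE.
have Dc : c = 0 by have := congr1 (fun X : 'M[R]_4 => X o1 o2) D0; rewrite !mxE.
have Db : b = 0 by have := congr1 (fun X : 'M[R]_4 => X o3 o1) D0; rewrite !mxE.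
have Da : a = 0 by have := congr1 (fun X : 'M[R]_4 => X o2 o3) D0; rewrite !mxE.
have W0 : Wm = 0.
  apply/matrixP => i j; rewrite !mxE.
  by case: i => [[|[|[|[|//]]]] Hi]; case: j => [[|[|[|[|//]]]] Hj] /=;
    rewrite ?Da ?Db ?Dc ?Dd ?Df ?Dg ?oppr0.
by move: Wu; rewrite W0 unitmxE det0 unitr0.
Qed.


Lemma e_00 : e o0 0 0 = 1 :> R. Proof. by rewrite mxE. Qed.
Lemma e_10 : e o1 0 0 = 0 :> R. Proof. by rewrite mxE. Qed.
Lemma e_20 : e o2 0 0 = 0 :> R. Proof. by rewrite mxE. Qed.
Lemma e_30 : e o3 0 0 = 0 :> R. Proof. by rewrite mxE. Qed.

Lemma form1_e (T : 'cV[R]_4) i : form1 T (e i) = T i 0.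
Proof. by rewrite /form1 /e -rowE mxE. Qed.

Lemma form2_e (W : 'M[R]_4) (x : V) j : form2 W x (e j) = (x *m W) 0 j.
Proof. by rewrite /form2 /e trmx_delta -colE mxE. Qed.

Lemma mbr_e (M : 'M[R]_4) i j :
  model_br M (e i) (e j) = e i 0 0 *: row j M - e j 0 0 *: row i M.
Proof. by rewrite /model_br /e -!rowE. Qed.

Lemma form2_lin (W : 'M[R]_4) a b (x y z : V) :
  form2 W (a *: x - b *: y) z = a * form2 W x z - b * form2 W y z.
Proof. by rewrite /form2 !mulmxBl -!scalemxAl !mxE. Qed.

Lemma form1_lin (T : 'cV[R]_4) a b (x y : V) :
  form1 T (a *: x - b *: y) = a * form1 T x - b * form1 T y.
Proof. by rewrite /form1 !mulmxBl -!scalemxAl !mxE. Qed.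

Lemma rowM (M W : 'M[R]_4) j k : (row j M *m W) 0 k = (M *m W) j k.
Proof. by rewrite -row_mul mxE. Qed.
Lemma rowMT (M : 'M[R]_4) (T : 'cV[R]_4) j : (row j M *m T) 0 0 = (M *m T) j 0.
Proof. by rewrite -row_mul mxE. Qed.

Lemma emb_m3 a b c d f g h i k : emb (m3 a b c d f g h i k) =
  m4 [:: [:: 0; 0; 0; 0]; [:: 0; a; b; c]; [:: 0; d; f; g]; [:: 0; h; i; k]].
Proof.
apply/matrixP => x y; rewrite [RHS]mxE /emb.
case: (unliftP ord0 x) => [x'|] ->; case: (unliftP ord0 y) => [y'|] ->;
  rewrite ?lft_ll ?lft_l0 ?lft_0l ?lft_00; last by [].
- rewrite mxE; by case: x' => [[|[|[|//]]] ?]; case: y' => [[|[|[|//]]] ?].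
- by case: x' => [[|[|[|//]]] ?].
- by case: y' => [[|[|[|//]]] ?].
Qed.

Lemma T0_of (T : 'cV[R]_4) : T o0 0 = 0 -> T o1 0 = 0 -> T o2 0 = 0 -> T o3 0 = 0 -> T = 0.
Proof.
move=> h0 h1 h2 h3; apply/matrixP => i j; rewrite (ord1 j) mxE.
case: i => [[|[|[|[|//]]]] Hi].
- by rewrite -h0; congr (T _ _); apply: val_inj.
- by rewrite -h1; congr (T _ _); apply: val_inj.
- by rewrite -h2; congr (T _ _); apply: val_inj.
- by rewrite -h3; congr (T _ _); apply: val_inj.
Qed.

Lemma no_LCS_abelian : ~ has_LCS (model_br (emb (0 : 'M[R]_3))).
Proof.
have -> : emb (0 : 'M[R]_3) = 0.
  apply/matrixP => i j; rewrite /emb [RHS]mxE.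
  by case: (unliftP ord0 i) => [i'|] ->; case: (unliftP ord0 j) => [j'|] ->;
    rewrite ?lft_ll ?lft_l0 ?lft_0l ?lft_00 ?mxE.
move=> [W [T [WT Wu T0 _ d2W]]].
have Pf0 := Pf_neq0 WT Wu.
have br0 x y : model_br 0 x y = 0 by rewrite /model_br !mulmx0 !scaler0 subrr.
have f20 z : form2 W 0 z = 0 by rewrite /form2 !mul0mx mxE.
have E0 := d2W (e o1) (e o2) (e o3); have E1 := d2W (e o0) (e o2) (e o3).
have E2 := d2W (e o0) (e o1) (e o3); have E3 := d2W (e o0) (e o1) (e o2).
rewrite /d2 /wedge12 !br0 !f20 !form1_e !form2_e /e -!rowE !mxE in E0 E1 E2 E3.
rewrite /Pf in Pf0.
move: E0 E1 E2 E3 Pf0.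
set t0 := T o0 0; set t1 := T o1 0; set t2 := T o2 0; set t3 := T o3 0.
set a := W o0 o1; set b := W o0 o2; set c := W o0 o3.
set d := W o1 o2; set f := W o1 o3; set g := W o2 o3.
move=> E0 E1 E2 E3 Pf0.
have E0' := E0; rewrite !oppr0 !addr0 in E0'.
have := congr1 (fun z => a * z) E0'.
have := congr1 (fun z => b * z) E0'.
have := congr1 (fun z => c * z) E0'.
have := congr1 (fun z => d * z) E0'.
have := congr1 (fun z => f * z) E0'.
have := congr1 (fun z => g * z) E0'.
have E1' := E1; rewrite !oppr0 !addr0 in E1'.
have := congr1 (fun z => a * z) E1'.
have := congr1 (fun z => b * z) E1'.
have := congr1 (fun z => c * z) E1'.
have := congr1 (fun z => d * z) E1'.
have := congr1 (fun z => f * z) E1'.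
have := congr1 (fun z => g * z) E1'.
have E2' := E2; rewrite !oppr0 !addr0 in E2'.
have := congr1 (fun z => a * z) E2'.
have := congr1 (fun z => b * z) E2'.
have := congr1 (fun z => c * z) E2'.
have := congr1 (fun z => d * z) E2'.
have := congr1 (fun z => f * z) E2'.
have := congr1 (fun z => g * z) E2'.
have E3' := E3; rewrite !oppr0 !addr0 in E3'.
have := congr1 (fun z => a * z) E3'.
have := congr1 (fun z => b * z) E3'.
have := congr1 (fun z => c * z) E3'.
have := congr1 (fun z => d * z) E3'.
have := congr1 (fun z => f * z) E3'.
have := congr1 (fun z => g * z) E3'.
move=> *.
have h0 : t0 * (a * g - b * f + c * d) = 0 by lra.
have h1 : t1 * (a * g - b * f + c * d) = 0 by lra.
have h2 : t2 * (a * g - b * f + c * d) = 0 by lra.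
have h3 : t3 * (a * g - b * f + c * d) = 0 by lra.
move/negbTE: Pf0 => Pf0.
move/eqP: h0; rewrite mulf_eq0 Pf0 orbF => /eqP h0.
move/eqP: h1; rewrite mulf_eq0 Pf0 orbF => /eqP h1.
move/eqP: h2; rewrite mulf_eq0 Pf0 orbF => /eqP h2.
move/eqP: h3; rewrite mulf_eq0 Pf0 orbF => /eqP h3.
by move/negP: T0; apply; apply/eqP; apply: T0_of.
Qed.


Definition Dg (x y z : R) := m3 x 0 0 0 y 0 0 0 z.
Definition Tri (x y k : R) := m3 x 0 0 0 y 0 0 k y.
Definition J3 (x : R) := m3 x 0 0 1 x 0 0 1 x.
Definition Cm (r p q : R) := m3 r 0 0 0 p (- q) 0 q p.

Lemma no_LCS_C0 m : m != 0 -> ~ has_LCS (model_br (emb (Cm m 0 1))).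
Proof.
move=> m0; rewrite /Cm emb_m3.
move=> [W [T [WT Wu T0 d1T d2W]]].
have Pf0 := Pf_neq0 WT Wu.
have WE := skew4E WT.
have F1 := d1T (e o0) (e o1); have F2 := d1T (e o0) (e o2); have F3 := d1T (e o0) (e o3).
rewrite /d1 !mbr_e e_00 e_10 e_20 e_30 !form1_lin /form1 !rowMT !mx4E !mxE /= in F1 F2 F3.
have E1 := d2W (e o0) (e o1) (e o2); have E2 := d2W (e o0) (e o1) (e o3).
have E3 := d2W (e o0) (e o2) (e o3).
rewrite /d2 /wedge12 !mbr_e e_00 e_10 e_20 e_30 !form2_lin !form2_e !form1_e in E1 E2 E3.
rewrite /e -!rowE !rowM !mx4E WE !mxE /= in E1 E2 E3.
rewrite /Pf in Pf0.
move: E1 E2 E3 Pf0 F1 F2 F3.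
set t0 := T o0 0; set t1 := T o1 0; set t2 := T o2 0; set t3 := T o3 0.
set a := W o0 o1; set b := W o0 o2; set c := W o0 o3.
set d := W o1 o2; set f := W o1 o3; set g := W o2 o3.
move=> E1 E2 E3 Pf0 F1 F2 F3.
have ht1 : t1 = 0.
  have /eqP : m * t1 = 0 by lra.
  by rewrite mulf_eq0 (negbTE m0) /= => /eqP.
have ht2 : t2 = 0 by lra.
have ht3 : t3 = 0 by lra.
have ht0 : t0 != 0.
  apply: contraNneq T0 => h0; apply/eqP; exact: T0_of.
have hg : g = 0.
  have /eqP : t0 * g = 0 by rewrite ht2 ht3 in E3; lra.
  by rewrite mulf_eq0 (negbTE ht0) /= => /eqP.
rewrite ht1 ht2 ht3 in E1 E2.
have e1 : f = (t0 + m) * d by lra.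
have e2 : - d = (t0 + m) * f by lra.
have hd0 : d * ((t0 + m) ^+ 2 + 1) = 0 by rewrite e1 in e2; lra.
have hp : 0 < (t0 + m) ^+ 2 + 1 by apply: (lt_le_trans ltr01); rewrite lerDr sqr_ge0.
have hd : d = 0.
  by move/eqP: hd0; rewrite mulf_eq0 (gt_eqF hp) orbF => /eqP.
have hf : f = 0 by rewrite e1 hd mulr0.
by move: Pf0; rewrite hd hf hg !mulr0 subrr addr0 eqxx.
Qed.

End Refute.

Section Leaves.
Variable R : realType.
Local Notation m3 := (@m3 R).

Lemma mkad_model (f : nat -> nat -> R) : is_model (mkad f).
Proof. by split=> k; rewrite mxE /= ?orbT. Qed.

Lemma blk_mkad (f : nat -> nat -> R) : blk (mkad f) =
  m3 (f 1 1)%N (f 1 2)%N (f 1 3)%N (f 2 1)%N (f 2 2)%N (f 2 3)%N (f 3 1)%N (f 3 2)%N (f 3 3)%N.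
Proof.
apply/matrixP => i j; rewrite !mxE.
by case: i => [[|[|[|//]]] ?]; case: j => [[|[|[|//]]] ?].
Qed.

Lemma iso_to (N : 'M[R]_3) (f : nat -> nat -> R) : sim N (blk (mkad f)) ->
  lie_isomorphic (model_br (emb N)) (model_br (mkad f)).
Proof. by move=> S; apply: iso_sim; rewrite ?blk_lft //; [apply: emb_model | apply: mkad_model]. Qed.

Lemma sim_m3 (B B' P : 'M[R]_3) c : P \in unitmx -> c != 0 -> P *m B = c *: (B' *m P) -> sim B B'.
Proof. by move=> *; exists P, c. Qed.

Ltac simtac P c :=
  exists P, c; split;
  [ apply: unit_m3; rewrite /det3 | | rewrite /Dg /Tri /J3 /Cm !mul_m3 scale_m3; apply: m3_congr ].

Lemma sim_scale (B : 'M[R]_3) c : c != 0 -> sim B (c^-1 *: B).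
Proof.
move=> c0; exists 1%:M, c; split=> //; first exact: unitmx1.
by rewrite mul1mx mulmx1 scalerA mulfV // scale1r.
Qed.

Lemma Good_Dg1 (a b : R) : Good (Dg 1 a b).
Proof.
move=> _.
have [b0|b0] := eqVneq b 0.
  right; right; left; exists a; apply: iso_to; rewrite blk_mkad /= b0; exact: sim_refl.
have [a0|a0] := eqVneq a 0.
  right; right; left; exists b; apply: iso_to; rewrite blk_mkad /=.
  simtac (m3 1 0 0 0 0 1 0 1 0) (1:R); rewrite ?a0; try ring.
  apply/eqP; lra. apply/eqP; lra.
right; right; right; left; exists a, b; split; first by rewrite mulf_neq0.
apply: iso_to; rewrite blk_mkad /=; exact: sim_refl.
Qed.


Lemma nzE (x y : R) : x = y -> y != 0 -> x != 0.
Proof. by move=> ->. Qed.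

Ltac ftac := try ring; try (field; done).

Lemma Good_Dgx (x y z : R) : x != 0 -> Good (Dg x y z).
Proof.
move=> x0; apply: (@Good_sim _ _ (Dg 1 (y / x) (z / x))); last exact: Good_Dg1.
simtac (m3 1 0 0 0 1 0 0 0 1) x; ftac; apply/eqP; lra.
Qed.

Lemma Dg000 : Dg 0 0 0 = 0 :> 'M[R]_3.
Proof.
apply/matrixP => i j; rewrite !mxE.
by case: i => [[|[|[|//]]] ?]; case: j => [[|[|[|//]]] ?].
Qed.

Lemma Good_Dg (x y z : R) : Good (Dg x y z).
Proof.
have [x0|x0] := eqVneq x 0; last exact: Good_Dgx.
have [y0|y0] := eqVneq y 0.
  have [z0|z0] := eqVneq z 0.
    by rewrite x0 y0 z0 Dg000 => /no_LCS_abelian.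
  apply: (@Good_sim _ _ (Dg z 0 0)); last exact: Good_Dgx.
  simtac (m3 0 0 1 0 1 0 1 0 0) (1:R); rewrite ?x0 ?y0; ftac; apply/eqP; lra.
apply: (@Good_sim _ _ (Dg y 0 z)); last exact: Good_Dgx.
simtac (m3 0 1 0 1 0 0 0 0 1) (1:R); rewrite ?x0; ftac; apply/eqP; lra.
Qed.

Lemma sim_Tri_k (x y k : R) : k != 0 -> sim (Tri x y k) (Tri x y 1).
Proof.
move=> k0; simtac (m3 1 0 0 0 1 0 0 0 k^-1) (1:R); ftac.
  by apply: (nzE (y := k^-1)); [ring | rewrite invr_eq0].
apply/eqP; lra.
Qed.

Lemma Good_Tri (x y k : R) : Good (Tri x y k).
Proof.
have [k0|k0] := eqVneq k 0.
  by rewrite k0; exact: Good_Dg.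
have [x0|x0] := eqVneq x 0.
  have [y0|y0] := eqVneq y 0.
    apply: (Good_sim (sim_Tri_k _ _ k0)); rewrite x0 y0.
    move=> _; left; apply: iso_to; rewrite blk_mkad /=.
    simtac (m3 0 0 1 0 1 0 1 0 0) (1:R); ftac; apply/eqP; lra.
  apply: (@Good_sim _ _ (Tri 0 1 (k / y))).
    simtac (m3 1 0 0 0 1 0 0 0 1) y; rewrite ?x0; ftac; apply/eqP; lra.
  have ky : k / y != 0 by rewrite mulf_neq0 ?invr_eq0.
  apply: (Good_sim (sim_Tri_k _ _ ky)).
  move=> _; do 4 right; left; apply: iso_to; rewrite blk_mkad /=.
  simtac (m3 0 1 0 0 0 1 1 0 0) (1:R); ftac; apply/eqP; lra.
apply: (@Good_sim _ _ (Tri 1 (y / x) (k / x))).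
  simtac (m3 1 0 0 0 1 0 0 0 1) x; ftac; apply/eqP; lra.
have kx : k / x != 0 by rewrite mulf_neq0 ?invr_eq0.
apply: (Good_sim (sim_Tri_k _ _ kx)).
move=> _; do 5 right; left; exists (y / x); apply: iso_to; rewrite blk_mkad /=.
exact: sim_refl.
Qed.

Lemma Good_J3 (x : R) : Good (J3 x).
Proof.
move=> _; have [x0|x0] := eqVneq x 0.
  right; left; apply: iso_to; rewrite blk_mkad /= x0.
  simtac (m3 0 0 1 0 1 0 1 0 0) (1:R); ftac; apply/eqP; lra.
do 6 right; left; apply: iso_to; rewrite blk_mkad /=.
simtac (m3 (x^-2) 0 0 0 x^-1 0 0 0 1) x; ftac.
  apply: (nzE (y := x^-3)); [field => // | by rewrite invr_eq0 expf_neq0].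
done.
Qed.

Lemma Good_Cm (r p q : R) : q != 0 -> Good (Cm r p q).
Proof.
move=> q0; apply: (@Good_sim _ _ (Cm (r / q) (p / q) 1)).
  simtac (m3 1 0 0 0 1 0 0 0 1) q; ftac; apply/eqP; lra.
have [r0|r0] := eqVneq (r / q) 0.
  move=> _; do 7 right; left; exists (p / q); apply: iso_to; rewrite blk_mkad /= r0.
  simtac (m3 0 1 0 0 0 1 1 0 0) (1:R); ftac; apply/eqP; lra.
have [p0|p0] := eqVneq (p / q) 0.
  by rewrite p0 => /(no_LCS_C0 r0).
move=> _; do 8 right; exists (r / q), (p / q); split => //.
apply: iso_to; rewrite blk_mkad /=; exact: sim_refl.
Qed.

End Leaves.

Section Tri.
Variable R : realType.
Local Notation m3 := (@m3 R).

Definition Lt (r s t a b d : R) := m3 r 0 0 a s 0 b d t.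

Ltac simtac P c :=
  exists P, c; split;
  [ apply: unit_m3; rewrite /det3 | | rewrite /Lt /Dg /Tri /J3 /Cm !mul_m3 scale_m3; apply: m3_congr ].
Ltac ftac := try ring; try (field; by repeat (apply/andP; split)).

Lemma Good_Lt (r s t a b d : R) : Good (Lt r s t a b d).
Proof.
case: (eqVneq r s) => [<-|rs].
  case: (eqVneq t r) => [->|tr].
    case: (eqVneq (d * a) 0) => [da|da].
      case: (eqVneq a 0) => [->|a0].
        case: (eqVneq d 0) => [->|d0].
          case: (eqVneq b 0) => [->|b0].
            exact: Good_Dg.
          apply: (@Good_sim _ _ (Tri r r 1)); last exact: Good_Tri.
          simtac (m3 0 1 0 b 0 0 0 0 1) (1:R); ftac.
            by apply: (nzE (y := - b)); [ring | rewrite oppr_eq0].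
          apply/eqP; lra.
        apply: (@Good_sim _ _ (Tri r r 1)); last exact: Good_Tri.
        simtac (m3 1 0 0 b d 0 0 0 1) (1:R); ftac.
          by apply: (nzE (y := d)); [ring | done].
        apply/eqP; lra.
      have d0 : d = 0 by move/eqP: da; rewrite mulf_eq0 (negbTE a0) orbF => /eqP.
      apply: (@Good_sim _ _ (Tri r r a)); last exact: Good_Tri.
      simtac (m3 0 (- (b / a)) 1 1 0 0 0 1 0) (1:R); rewrite ?d0; ftac; apply/eqP; lra.
    have d0 : d != 0 by move: da; rewrite mulf_eq0 negb_or => /andP [].
    have a0 : a != 0 by move: da; rewrite mulf_eq0 negb_or => /andP [].
    apply: (@Good_sim _ _ (J3 r)); last exact: Good_J3.
    simtac (m3 (d * a) 0 0 b d 0 0 0 1) (1:R); ftac.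
      by apply: (nzE (y := d * d * a)); [ring | rewrite !mulf_neq0].
    apply/eqP; lra.
  have tr' : t - r != 0 by rewrite subr_eq0.
  apply: (@Good_sim _ _ (Tri t r a)); last exact: Good_Tri.
  simtac (m3 ((b + d / (t - r) * a) / (t - r)) (d / (t - r)) 1 1 0 0 0 1 0) (1:R); ftac;
  apply/eqP; lra.
have sr : s - r != 0 by rewrite subr_eq0; apply: contraNneq rs => ->.
case: (eqVneq t s) => [->|ts].
  apply: (@Good_sim _ _ (Tri r s d)); last exact: Good_Tri.
  simtac (m3 1 0 0 (a / (s - r)) 1 0 ((b - d * (a / (s - r))) / (s - r)) 0 1) (1:R); ftac;
  apply/eqP; lra.
case: (eqVneq t r) => [->|tr].
  have rs' : r - s != 0 by rewrite subr_eq0.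
  apply: (@Good_sim _ _ (Tri s r (b + d / (r - s) * a))); last exact: Good_Tri.
  simtac (m3 (a / (s - r)) 1 0 1 0 0 0 (d / (r - s)) 1) (1:R); ftac; apply/eqP; lra.
have ts' : t - s != 0 by rewrite subr_eq0.
have tr' : t - r != 0 by rewrite subr_eq0.
apply: (@Good_sim _ _ (Dg r s t)); last exact: Good_Dg.
simtac (m3 1 0 0 (a / (s - r)) 1 0 ((b + d / (t - s) * a) / (t - r)) (d / (t - s)) 1) (1:R);
  ftac; apply/eqP; lra.
Qed.


End Tri.

Section Cplx.
Variable R : realType.
Local Notation m3 := (@m3 R).

Ltac simtac P c :=
  exists P, c; split;
  [ apply: unit_m3; rewrite /det3 | | rewrite /Lt /Dg /Tri /J3 /Cm !mul_m3 scale_m3; apply: m3_congr ].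
Ltac ftac := try ring; try (field; by repeat (apply/andP; split)).

Lemma real_sim (r a1 a2 c11 c12 c21 c22 s : R) : c12 != 0 ->
  s ^+ 2 - (c11 + c22) * s + c11 * c22 - c12 * c21 = 0 ->
  sim (m3 r 0 0 a1 c11 c12 a2 c21 c22) (Lt r s (c11 + c22 - s) ((s - c22) * a1 + c12 * a2) a1 1).
Proof.
move=> c0 hs; simtac (m3 1 0 0 0 (s - c22) c12 0 1 0) (1:R); ftac.
- by apply: (nzE (y := - c12)); [ring | rewrite oppr_eq0].
- apply/eqP; lra.
- lra.
Qed.

Lemma cplx_sim (r a1 a2 p h c12 q : R) : c12 != 0 -> q != 0 ->
  sim (m3 r 0 0 a1 (p + h) c12 a2 (- (q ^+ 2 + h ^+ 2) / c12) (p - h)) (Cm r p (- q)).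
Proof.
move=> c0 q0.
have D0 : (r - p) ^+ 2 + q ^+ 2 != 0.
  have hq : 0 < q ^+ 2 by rewrite lt0r sqrf_eq0 q0 sqr_ge0.
  by apply: lt0r_neq0; apply: ltr_wpDl (sqr_ge0 _) hq.
set D := (r - p) ^+ 2 + q ^+ 2 in D0.
set al := a1; set be := ((h * a1 + c12 * a2) / q).
simtac (m3 1 0 0 ((- (r - p) * al - q * be) / D) 1 0 ((q * al - (r - p) * be) / D) (h / q) (c12 / q)) (1:R);
  rewrite /D /be /al; ftac.
- by apply: (nzE (y := c12 / q)); [ring | rewrite mulf_neq0 ?invr_eq0].
- apply/eqP; lra.
Qed.

End Cplx.

Section Final.
Variable R : realType.
Local Notation m3 := (@m3 R).

Lemma eig_step (B : 'M[R]_3) : exists B', sim B B' /\ B' i0 i1 = 0 /\ B' i0 i2 = 0.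
Proof.
have [r hr] : {r | root (char_poly B) r}.
  by apply: polyrcf.odd_poly_root; rewrite size_char_poly.
have /eigenvalueP [v vB v0] : eigenvalue B r by rewrite eigenvalue_root_char.
pose E := row_ebase v; pose C := col_ebase v.
pose y := C *m pid_mx 1 : 'rV[R]_3.
have hv : y *m E = v by have := mulmx_ebase v; rewrite rank_rV v0.
have yj (j : 'I_3) : j != ord0 -> y 0 j = 0.
  move=> jn; rewrite /y mxE big_ord1.
  have -> : (pid_mx 1 : 'M[R]_(1, 3)) 0 j = 0 by rewrite mxE; case: j jn => [[|[|[|//]]] ?].
  by rewrite mulr0.
have y00 : y 0 ord0 != 0.
  apply: contra v0 => /eqP h; apply/eqP; rewrite -hv.
  have -> : y = 0.
    apply/rowP => j; rewrite [RHS]mxE; have [->|jn] := eqVneq j ord0; first exact: h.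
    exact: yj.
  by rewrite mul0mx.
pose B' := E *m B *m invmx E.
exists B'; split.
  exists E, 1; split; first exact: row_ebase_unit.
    exact: oner_neq0.
  by rewrite scale1r /B' mulmxKV // row_ebase_unit.
have yB : y *m B' = r *: y.
  rewrite /B' !mulmxA hv vB -scalemxAl -hv mulmxK //; exact: row_ebase_unit.
clearbody y B'.
have key (j : 'I_3) : j != ord0 -> B' ord0 j = 0.
  move=> jn; have := congr1 (fun X : 'rV[R]_3 => X 0 j) yB.
  rewrite mxE big_ord_recl big1 ?addr0; last first.
    by move=> k _; rewrite yj ?mul0r // eq_sym neq_lift.
  rewrite mxE (yj j jn) mulr0 => /eqP.
  by rewrite mulf_eq0 (negbTE y00) /= => /eqP.
by split; apply: key.
Qed.

Lemma Good_all (B : 'M[R]_3) : Good B.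
Proof.
have [B' [S [h1 h2]]] := eig_step B.
apply: (Good_sim S); rewrite (m3E B') h1 h2.
set r := B' i0 i0; set a1 := B' i1 i0; set c11 := B' i1 i1; set c12 := B' i1 i2.
set a2 := B' i2 i0; set c21 := B' i2 i1; set c22 := B' i2 i2.
have [c0|c0] := eqVneq c12 0.
  rewrite c0; exact: Good_Lt.
pose disc := (c11 - c22) ^+ 2 + 4 * c12 * c21.
have [dp|dn] := lerP 0 disc.
  pose s := (c11 + c22 + Num.sqrt disc) / 2.
  have hs : s ^+ 2 - (c11 + c22) * s + c11 * c22 - c12 * c21 = 0.
    have hq := sqr_sqrtr dp.
    rewrite /s; move: hq; rewrite /disc; set q := Num.sqrt _ => hq.
    have -> : ((c11 + c22 + q) / 2) ^+ 2 - (c11 + c22) * ((c11 + c22 + q) / 2) +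
      c11 * c22 - c12 * c21 = (q ^+ 2 - ((c11 - c22) ^+ 2 + 4 * c12 * c21)) / 4 by field.
    by rewrite hq subrr mul0r.
  apply: (Good_sim (real_sim r a1 a2 c0 hs)); exact: Good_Lt.
pose q := Num.sqrt (- disc) / 2.
have q0 : q != 0.
  apply: mulf_neq0; last by rewrite invr_eq0 pnatr_eq0.
  by apply: lt0r_neq0; rewrite sqrtr_gt0 oppr_gt0.
pose p := (c11 + c22) / 2; pose h := (c11 - c22) / 2.
have hq : q ^+ 2 = - disc / 4.
  rewrite /q expr_div_n sqr_sqrtr; last by rewrite oppr_ge0 ltW.
  field; by rewrite ?pnatr_eq0.
have -> : m3 r 0 0 a1 c11 c12 a2 c21 c22 =
    m3 r 0 0 a1 (p + h) c12 a2 (- (q ^+ 2 + h ^+ 2) / c12) (p - h).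
  apply: m3_congr; rewrite /p /h //; try (field; by rewrite ?pnatr_eq0).
  rewrite hq /disc; field; by do ?[apply/andP; split]; rewrite ?pnatr_eq0.
apply: (Good_sim (cplx_sim r a1 a2 p h c0 q0)); apply: Good_Cm.
by rewrite oppr_eq0.
Qed.

End Final.


Unset Implicit Arguments.

Theorem theorem4p5 (R : realType) (br : 'rV[R]_4 -> 'rV[R]_4 -> 'rV[R]_4) :
  is_lie_bracket br -> almost_abelian br -> has_LCS br -> in_list br.
Proof.
move=> Lb Aa L; have [M [Mm I]] := reduce Lb Aa.
have L' := LCS_iso I L.
apply: (in_list_iso I); rewrite (model_emb Mm) in L' *.
exact: Good_all L'.
Qed.
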